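(* Let $(\Omega,\rho)$ be a metric space, $\beta\in(0,1]$, $A\subset\Omega$ finite with $|A|\ge2$, and $g:A\to[0,1]$ not constant. Let $F:\Omega\to[0,1]$ be the $\beta$-PMSE of $g$ from $A$. Let $E\subset\Omega$ satisfy $\mathrm{diam}(E)^\beta\le\frac12\min_{x\ne x'\in A}\rho(x,x')^\beta$. Then $\sup_{x,x'\in E}\frac{\Lambda^\beta_F(x)}{\Lambda^\beta_F(x')}\le2$.
   Context: $\Lambda_F^\beta(x):=\sup_{y\in\Omega\setminus\{x\}}\frac{|F(x)-F(y)|}{\rho(x,y)^\beta}$. For $x\in\Omega$ and $u,v\in A$ (excluding $u=v=x$), $R_x(u,v):=\frac{g(v)-g(u)}{\rho(x,v)^\beta+\rho(x,u)^\beta}$, $F_x(u,v):=g(u)+R_x(u,v)\rho(x,u)^\beta$, $R^*_x:=\max_{u,v\in A}R_x(u,v)$, $W_x(\epsilon):=\{(u,v)\in A\times A: R_x(u,v)>R_x^*-\epsilon\}$, $\Phi_x(\epsilon):=\{F_x(u,v):(u,v)\in W_x(\epsilon)\}$. The $\beta$-PMSE is $F(x):=\lim_{\epsilon\to0^+}\Phi_x(\epsilon)$, i.e. the unique $r$ with $\sup_{\phi\in\Phi_x(\epsilon)}|\phi-r|\to0$; when a unique maximizer $(u^*_x,v^*_x)$ of $R_x$ exists this equals $g(u^*_x)+\frac{\rho(x,u^*_x)^\beta}{\rho(x,u^*_x)^\beta+\rho(x,v^*_x)^\beta}(g(v^*_x)-g(u^*_x))$. *)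

(* Defs.v *)
From HB Require Import structures.
From mathcomp Require Import all_boot all_order all_algebra.
From mathcomp Require Import all_classical all_reals all_analysis.
Set Implicit Arguments. Unset Strict Implicit. Unset Printing Implicit Defensive.
Import Order.TTheory GRing.Theory Num.Theory.
Local Open Scope classical_set_scope.
Local Open Scope ring_scope.

Definition is_metric (R : realType) (T : Type) (rho : T -> T -> R) : Prop :=
  [/\ forall x y, 0 <= rho x y,
      forall x y, rho x y = 0 <-> x = y,
      forall x y, rho x y = rho y x &
      forall x y z, rho x z <= rho x y + rho y z].

Section PMSE.
Variables (R : realType) (T : Type) (rho : T -> T -> R) (beta : R).
Variables (A : set T) (g : T -> R).

Definition adm (x : T) (u v : T) : Prop := A u /\ A v /\ ~ (u = x /\ v = x).

Definition Rx (x u v : T) : R :=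
  (g v - g u) / (rho x v `^ beta + rho x u `^ beta).

Definition Fx (x u v : T) : R := g u + Rx x u v * rho x u `^ beta.

Definition Rstar (x : T) : R :=
  sup [set r | exists u v, adm x u v /\ r = Rx x u v].

Definition W (x : T) (eps : R) : set (T * T) :=
  [set p | adm x p.1 p.2 /\ Rx x p.1 p.2 > Rstar x - eps].

Definition Phi (x : T) (eps : R) : set R := [set Fx x p.1 p.2 | p in W x eps].

(* F(x) = lim_{eps -> 0+} Phi_x(eps): sup_{phi in Phi_x(eps)} |phi - F x| -> 0 *)
Definition is_PMSE (F : T -> R) : Prop :=
  forall x, forall e, 0 < e -> exists2 d, 0 < d &
    forall eps, 0 < eps -> eps < d ->
      forall phi, Phi x eps phi -> `|phi - F x| <= e.
End PMSE.

Local Open Scope ereal_scope.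

Definition Lambda (R : realType) (T : Type) (rho : T -> T -> R) (beta : R)
  (F : T -> R) (x : T) : \bar R :=
  ereal_sup [set ((`|F x - F y| / rho x y `^ beta)%R)%:E | y in [set y | y <> x]].

Definition diam (R : realType) (T : Type) (rho : T -> T -> R) (E : set T) : \bar R :=
  ereal_sup [set (rho p.1 p.2)%:E | p in E `*` E].

Definition minsep_pow (R : realType) (T : Type) (rho : T -> T -> R) (beta : R)
  (A : set T) : R :=
  inf [set (rho p.1 p.2 `^ beta)%R | p in [set p | A p.1 /\ A p.2 /\ p.1 <> p.2]].

(* Main.v *)
Require Import Defs.
From HB Require Import structures.
From mathcomp Require Import all_boot all_order all_algebra.
From mathcomp Require Import all_classical all_reals all_analysis.
From mathcomp Require Import lra finmap.
Import Order.TTheory GRing.Theory Num.Theory.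
Local Open Scope classical_set_scope.
Local Open Scope ring_scope.
Lemma powR_subadd {R : realType} (beta a b : R) : 0 < beta <= 1 -> 0 <= a -> 0 <= b ->
  (a + b) `^ beta <= a `^ beta + b `^ beta.
Proof.
move=> /andP[b0 b1] a0 bb0.
have [s0|s0] := eqVneq (a + b) 0.
  have a00 : a = 0 by lra.
  have b00 : b = 0 by lra.
  by rewrite s0 a00 b00 powR0 ?gt_eqF// addr0.
have sp : 0 < a + b by rewrite lt_def s0 addr_ge0.
have key : forall c, 0 <= c <= a + b -> c / (a + b) * (a + b) `^ beta <= c `^ beta.
  move=> c /andP[c0 cs].
  have cq : c = c / (a + b) * (a + b) by rewrite divfK.
  rewrite [in leRHS]cq powRM; last first.
    exact: ltW.
    by rewrite divr_ge0 // ltW.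
  apply: ler_wpM2r; first exact: powR_ge0.
  have [->|cn0] := eqVneq c 0; first by rewrite mul0r powR_ge0.
  apply: ger1_powR => //; apply/andP; split.
    by rewrite divr_gt0// lt_def cn0 c0.
  by rewrite ler_pdivrMr// mul1r.
have ka := key a. have kb := key b.
have e : (a + b) `^ beta = a / (a + b) * (a + b) `^ beta + b / (a + b) * (a + b) `^ beta.
  by rewrite -mulrDl -mulrDl divff// mul1r.
rewrite e; apply: lerD; [apply: ka | apply: kb]; apply/andP; split => //; lra.
Qed.

Lemma tri_pow {R : realType} {T : Type} (rho : T -> T -> R) (beta : R) :
  is_metric rho -> 0 < beta <= 1 -> forall x y z,
  rho x z `^ beta <= rho x y `^ beta + rho y z `^ beta.
Proof.
move=> [h0 h1 h2 h3] hb x y z.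
have b0 : 0 <= beta by case/andP: hb => /ltW.
apply: le_trans (powR_subadd _ _ _ hb (h0 x y) (h0 y z)).
by apply: ge0_ler_powR => //; rewrite ?nnegrE ?addr_ge0.
Qed.

Lemma seq_max {R : realType} (s : seq R) : s != [::] ->
  exists2 m, m \in s & forall y, y \in s -> y <= m.
Proof.
elim: s => // a s IH _.
have [->|sn] := eqVneq s [::].
  by exists a; rewrite ?mem_seq1// => y; rewrite mem_seq1 => /eqP->.
have [m ms mmax] := IH sn.
have [am|ma] := leP a m.
  exists m; first by rewrite in_cons ms orbT.
  by move=> y; rewrite in_cons => /orP[/eqP->//|/mmax].
exists a; first by rewrite in_cons eqxx.
move=> y; rewrite in_cons => /orP[/eqP->//|/mmax ym].
exact: le_trans ym (ltW ma).
Qed.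

Lemma finite_max {R : realType} (S : set R) : finite_set S -> S !=set0 ->
  exists m, S m /\ forall y, S y -> y <= m.
Proof.
move=> /finite_fsetP[X ->] [z zX].
have mem : forall y : R, (y \in X) = (y \in enum_fset X) by [].
have : enum_fset X != [::].
  by apply/eqP => e; move: zX => /=; rewrite mem e.
move=> /seq_max[m mX mm]; exists m; split; first by rewrite /= mem.
by move=> y yX; apply: mm; rewrite -mem; exact: yX.
Qed.

Lemma pos_pow {R : realType} {T : Type} {rho : T -> T -> R} {beta : R} {x y : T} :
  is_metric rho -> 0 < beta -> x <> y -> 0 < rho x y `^ beta.
Proof.
move=> [h0 h1 h2 h3] b0 xy; apply: powR_gt0.
by rewrite lt_def h0 andbT; apply/eqP => /h1.
Qed.

Lemma den_pos {R : realType} {T : Type} {rho : T -> T -> R} {beta : R} {x u v : T} :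
  is_metric rho -> 0 < beta -> ~ (u = x /\ v = x) ->
  0 < rho x v `^ beta + rho x u `^ beta.
Proof.
move=> hm b0 nuv.
have [ux|ux] := pselect (u = x).
  have vx : x <> v by move=> e; apply: nuv; split.
  have := pos_pow hm b0 vx; have := powR_ge0 (rho x u) beta; lra.
have xu : x <> u by move=> e; apply: ux.
have := pos_pow hm b0 xu; have := powR_ge0 (rho x v) beta; lra.
Qed.

Lemma Rstar_attained {R : realType} {T : Type} (rho : T -> T -> R) (beta : R) A g x :
  finite_set A -> (exists a b, A a /\ A b /\ a <> b) ->
  (exists u v, adm A x u v /\ Rx rho beta g x u v = Rstar rho beta A g x) /\
  (forall u v, adm A x u v -> Rx rho beta g x u v <= Rstar rho beta A g x).
Proof.
move=> fA [a [b [Aa [Ab ab]]]].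
set S := [set r | exists u v, adm A x u v /\ r = Rx rho beta g x u v].
have fS : finite_set S.
  apply: (@sub_finite_set _ _ ((fun p => Rx rho beta g x p.1 p.2) @` (A `*` A))).
    move=> r [u [v [[Au [Av _]] ->]]]; by exists (u, v).
  by apply: finite_image; apply: finite_setX.
have nS : S !=set0.
  exists (Rx rho beta g x a b), a, b; split => //; split => //; split => //.
  by move=> [ax bx]; apply: ab; rewrite ax bx.
have [m [Sm mm]] := finite_max _ fS nS.
have supm : Rstar rho beta A g x = m.
  rewrite /Rstar -/S; apply/eqP; rewrite eq_le; apply/andP; split.
    by apply: ge_sup.
  by apply: ub_le_sup => //; exists m.
rewrite supm; split.
  by case: Sm => u [v [h ->]]; exists u, v.
by move=> u v h; apply: mm; exists u, v.
Qed.

Lemma F_at_max {R : realType} {T : Type} (rho : T -> T -> R) (beta : R) A g F x u v :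
  is_PMSE rho beta A g F -> adm A x u v -> Rx rho beta g x u v = Rstar rho beta A g x ->
  F x = Fx rho beta g x u v.
Proof.
move=> hP huv hmax.
set phi := Fx rho beta g x u v.
have inPhi : forall eps, 0 < eps -> Phi rho beta A g x eps phi.
  move=> eps e0; exists (u, v) => //; split => //=.
  rewrite hmax; lra.
apply/eqP; rewrite eq_sym -subr_eq0 -normr_eq0.
have [//|hne] := eqVneq (`|phi - F x|) 0; exfalso.
have dpos : 0 < `|phi - F x| by rewrite lt_def hne normr_ge0.
have h2 : (0:R) < 2 by lra.
have [d d0 hd] := hP x (`|phi - F x| / 2) (divr_gt0 dpos h2).
have d2 : 0 < d / 2 by lra.
have := hd (d / 2) d2 _ phi (inPhi _ d2).
have -> : d / 2 < d by lra.
move=> /(_ isT); lra.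
Qed.

Lemma pack {R : realType} {T : Type} (rho : T -> T -> R) (beta : R) A g F x :
  is_metric rho -> 0 < beta <= 1 -> finite_set A ->
  (exists a b, A a /\ A b /\ a <> b) ->
  (exists a b, A a /\ A b /\ g a <> g b) -> is_PMSE rho beta A g F ->
  0 < Rstar rho beta A g x /\
  (exists u v, A u /\ A v /\ u <> v /\
     F x = g u + Rstar rho beta A g x * rho x u `^ beta /\
     F x = g v - Rstar rho beta A g x * rho x v `^ beta) /\
  (forall w, A w -> g w - Rstar rho beta A g x * rho x w `^ beta <= F x /\
                    F x <= g w + Rstar rho beta A g x * rho x w `^ beta) /\
  (forall u v, adm A x u v -> Rx rho beta g x u v <= Rstar rho beta A g x).
Proof.
move=> hm hb fA two [a [b [Aa [Ab gab]]]] hP.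
have b0 : 0 < beta by case/andP: hb.
have [[u [v [huv hmax]]] ub] := Rstar_attained rho beta A g x fA two.
set r := Rstar rho beta A g x in hmax ub *.
have hF := F_at_max _ _ _ _ _ _ _ _ hP huv hmax.
have Dp : forall p q, ~ (p = x /\ q = x) ->
    0 < rho x q `^ beta + rho x p `^ beta.
  by move=> p q h; exact: den_pos hm b0 h.
have ge := fun p => powR_ge0 (rho x p) beta.
have rle : forall p q, adm A x p q -> g q - g p <= r * (rho x q `^ beta + rho x p `^ beta).
  move=> p q hpq; have := ub p q hpq; rewrite /Rx.
  by rewrite ler_pdivrMr //; apply: Dp; case: hpq => _ [].
have rpos : 0 < r.
  have ab : a <> b by move=> e; apply: gab; rewrite e.
  have nab : ~ (a = x /\ b = x) by move=> [ax bx]; apply: ab; rewrite ax bx.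
  have nba : ~ (b = x /\ a = x) by move=> [bx ax]; apply: ab; rewrite ax bx.
  have h1 := ub a b (conj Aa (conj Ab nab)).
  have h2 := ub b a (conj Ab (conj Aa nba)).
  move: h1 h2; rewrite /Rx.
  have [lt|lt] := ltP (g a) (g b).
    move=> h1 _; apply: lt_le_trans h1; apply: divr_gt0; first by lra.
    exact: Dp.
  have lt' : g b < g a.
    by rewrite lt_def lt andbT; apply/eqP => e; apply: gab.
  move=> _ h2; apply: lt_le_trans h2; apply: divr_gt0; first by lra.
  exact: Dp.
have nuv : ~ (u = x /\ v = x) by case: huv => _ [].
have eqD : r * (rho x v `^ beta + rho x u `^ beta) = g v - g u.
  by rewrite -hmax /Rx divfK //; apply/lt0r_neq0/Dp.
have Fu : F x = g u + r * rho x u `^ beta by rewrite hF /Fx hmax.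
have Fv : F x = g v - r * rho x v `^ beta.
  move: eqD; rewrite mulrDr => eqD; rewrite Fu; lra.
split => //; split.
  have guv : g u < g v.
    have := Dp _ _ nuv => hD.
    rewrite -subr_gt0 -eqD; exact: mulr_gt0.
  exists u, v; split; first by case: huv.
  split; first by case: huv => _ [].
  split; first by move=> e; move: guv; rewrite e ltxx.
  by split.
split=> // w Aw.
have grw := ge w.
have rw : 0 <= r * rho x w `^ beta by rewrite mulr_ge0 // ltW.
split.
  have [adm1|nadm] := pselect (adm A x u w).
    have := rle _ _ adm1; rewrite mulrDr; lra.
  have [e1 e2] : u = x /\ w = x.
    apply: contrapT => h; apply: nadm; split; first by case: huv.
    by split.
  have uw : u = w by rewrite e1 e2.
  rewrite Fu uw; lra.
have [adm1|nadm] := pselect (adm A x w v).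
  have := rle _ _ adm1; rewrite mulrDr; lra.
have [e1 e2] : w = x /\ v = x.
  apply: contrapT => h; apply: nadm; split => //; split => //; by case: huv => _ [].
have vw : v = w by rewrite e1 e2.
rewrite Fv vw; lra.
Qed.

Lemma F_on_A {R : realType} {T : Type} (rho : T -> T -> R) (beta : R) A g F y :
  is_metric rho -> 0 < beta <= 1 -> finite_set A ->
  (exists a b, A a /\ A b /\ a <> b) ->
  (exists a b, A a /\ A b /\ g a <> g b) -> is_PMSE rho beta A g F ->
  A y -> F y = g y.
Proof.
move=> hm hb fA two ng hP Ay.
have [_ [_ [hb2 _]]] := pack rho beta A g F y hm hb fA two ng hP.
have [h1 h2] := hb2 y Ay.
have b0 : beta != 0 by case/andP: hb => /gt_eqF ->.
have e : rho y y = 0 by case: hm => _ h _ _; apply/h.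
move: h1 h2; rewrite e powR0 // mulr0 subr0 addr0 => h1 h2.
by apply/eqP; rewrite eq_le h1 h2.
Qed.

Lemma F_lip {R : realType} {T : Type} (rho : T -> T -> R) (beta : R) A g F x y :
  is_metric rho -> 0 < beta <= 1 -> finite_set A ->
  (exists a b, A a /\ A b /\ a <> b) ->
  (exists a b, A a /\ A b /\ g a <> g b) -> is_PMSE rho beta A g F ->
  `|F x - F y| <= Rstar rho beta A g x * rho x y `^ beta.
Proof.
move=> hm hb fA two ng hP.
have [rx [[ux [vx [Aux [Avx [_ [Fxu Fxv]]]]]] [bx _]]] := pack rho beta A g F x hm hb fA two ng hP.
have [ry [[uy [vy [Auy [Avy [_ [Fyu Fyv]]]]]] [by' _]]] := pack rho beta A g F y hm hb fA two ng hP.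
set r := Rstar rho beta A g x in rx Fxu Fxv bx *.
set s := Rstar rho beta A g y in ry Fyu Fyv by' *.
have tp := tri_pow _ _ hm hb.
have sym : forall p q, rho p q `^ beta = rho q p `^ beta.
  by move=> p q; case: hm => _ _ h _; rewrite h.
have ge := fun p q => powR_ge0 (rho p q) beta.
have mulle : forall a b c : R, 0 <= a -> b <= c -> a * b <= a * c.
  by move=> a b c a0 bc; apply: ler_wpM2l.
rewrite ler_norml; apply/andP; split.
- have [syr|rys] := leP s r.
  + have [_ h1] := by' ux Aux.
    have t1 := tp y x ux. rewrite (sym y x) in t1.
    have m1 := mulle r _ _ (ltW rx) t1.
    have m2 : s * rho y ux `^ beta <= r * rho y ux `^ beta by apply: ler_wpM2r.
    rewrite mulrDr in m1. lra.
  + have [l1 _] := bx vy Avy.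
    have t1 := tp x y vy.
    have m1 := mulle r _ _ (ltW rx) t1.
    have m2 : r * rho y vy `^ beta <= s * rho y vy `^ beta by apply: ler_wpM2r => //; exact: ltW.
    rewrite mulrDr in m1. lra.
- have [syr|rys] := leP s r.
  + have [h1 _] := by' vx Avx.
    have t1 := tp y x vx. rewrite (sym y x) in t1.
    have m1 := mulle r _ _ (ltW rx) t1.
    have m2 : s * rho y vx `^ beta <= r * rho y vx `^ beta by apply: ler_wpM2r.
    rewrite mulrDr in m1. lra.
  + have [_ l1] := bx uy Auy.
    have t1 := tp x y uy.
    have m1 := mulle r _ _ (ltW rx) t1.
    have m2 : r * rho y uy `^ beta <= s * rho y uy `^ beta by apply: ler_wpM2r => //; exact: ltW.
    rewrite mulrDr in m1. lra.
Qed.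

Lemma Lambda_eq {R : realType} {T : Type} (rho : T -> T -> R) (beta : R) A g F x :
  is_metric rho -> 0 < beta <= 1 -> finite_set A ->
  (exists a b, A a /\ A b /\ a <> b) ->
  (exists a b, A a /\ A b /\ g a <> g b) -> is_PMSE rho beta A g F ->
  Lambda rho beta F x = (Rstar rho beta A g x)%:E.
Proof.
move=> hm hb fA two ng hP.
have b0 : 0 < beta by case/andP: hb.
apply/eqP; rewrite eq_le; apply/andP; split.
  apply: ge_ereal_sup => z [y yx <-]; rewrite lee_fin.
  have xy : x <> y by move=> e; apply: yx; rewrite e.
  rewrite ler_pdivrMr; last exact: pos_pow.
  exact: F_lip.
have [rx [[u [v [Au [Av [uv [Fu Fv]]]]]] _]] := pack rho beta A g F x hm hb fA two ng hP.
set r := Rstar rho beta A g x in rx Fu Fv *.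
have key : forall y, A y -> y <> x -> F x = g y + r * rho x y `^ beta \/ F x = g y - r * rho x y `^ beta ->
    (r%:E <= Lambda rho beta F x)%E.
  move=> y Ay yx hy; apply: ereal_sup_ubound; exists y => //.
  have xy : x <> y by move=> e; apply: yx; rewrite e.
  have pp := pos_pow hm b0 xy.
  congr (_%:E); rewrite (F_on_A rho beta A g F y hm hb fA two ng hP Ay).
  case: hy => ->.
    by rewrite addrAC subrr add0r ger0_norm ?mulfK ?mulr_ge0 ?ltW // gt_eqF.
  by rewrite addrAC subrr add0r normrN ger0_norm ?mulfK ?mulr_ge0 ?ltW // gt_eqF.
have [ux|ux] := pselect (u = x).
  apply: (key v Av) => //; last by right.
  by move=> e; apply: uv; rewrite ux e.
by apply: (key u Au) => //; left.
Qed.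

Theorem mainTheorem12 (R : realType) (T : Type) (rho : T -> T -> R) (beta : R)
  (A : set T) (g : T -> R) (F : T -> R) (E : set T) :
  is_metric rho ->
  0 < beta <= 1 ->
  finite_set A ->
  (exists a b, A a /\ A b /\ a <> b) ->
  (forall a, A a -> 0 <= g a <= 1) ->
  (exists a b, A a /\ A b /\ g a <> g b) ->
  is_PMSE rho beta A g F ->
  (poweR (diam rho E) beta <= (2^-1 * minsep_pow rho beta A)%:E)%E ->
  forall x x', E x -> E x' ->
    (Lambda rho beta F x <= 2%:E * Lambda rho beta F x')%E.
Proof.
move=> hm hb fA two _ ng hP hd x x' Ex Ex'.
have b0 : 0 < beta by case/andP: hb.
rewrite (Lambda_eq rho beta A g F x hm hb fA two ng hP).
rewrite (Lambda_eq rho beta A g F x' hm hb fA two ng hP).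
rewrite -EFinM lee_fin.
have [rx [[u [v [Au [Av [uv [Fu Fv]]]]]] _]] := pack rho beta A g F x hm hb fA two ng hP.
have [_ [_ [_ ub']]] := pack rho beta A g F x' hm hb fA two ng hP.
set r := Rstar rho beta A g x in rx Fu Fv *.
set r' := Rstar rho beta A g x' in ub' *.
set m := minsep_pow rho beta A in hd.
have tp := tri_pow _ _ hm hb.
have sym : forall p q, rho p q `^ beta = rho q p `^ beta.
  by move=> p q; case: hm => _ _ h _; rewrite h.
have ge := fun p q => powR_ge0 (rho p q) beta.
have muv : m <= rho u v `^ beta.
  apply: ge_inf; first by exists 0 => z [p _ <-]; exact: ge.
  by exists (u, v).
have dle : ((rho x x')%:E <= diam rho E)%E.
  by apply: ereal_sup_ubound; exists (x, x').
have dxx : rho x x' `^ beta <= 2^-1 * m.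
  move: hd dle; case: (diam rho E) => [dd| |] /=.
  - rewrite !lee_fin => h1 h2; apply: le_trans h1.
    apply: ge0_ler_powR => //; first exact: ltW.
      by rewrite nnegrE; case: hm.
    by rewrite nnegrE; apply: le_trans h2; case: hm.
  - by rewrite gt_eqF.
  - by [].
have t1 := tp u x v. rewrite (sym u x) in t1.
have t2 := tp x' x u. rewrite (sym x' x) in t2.
have t3 := tp x' x v. rewrite (sym x' x) in t3.
have nuv : ~ (u = x' /\ v = x') by move=> [a1 a2]; apply: uv; rewrite a1 a2.
have Dp := den_pos hm b0 nuv.
set D' := rho x' v `^ beta + rho x' u `^ beta in Dp *.
have hadm : adm A x' u v by [].
have hR := ub' u v hadm.
have eR : Rx rho beta g x' u v * D' = g v - g u.
  by rewrite /Rx divfK // gt_eqF.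
have gd : g v - g u = r * (rho x u `^ beta + rho x v `^ beta) by rewrite mulrDr; lra.
have D'le : D' <= 2 * (rho x u `^ beta + rho x v `^ beta) by rewrite /D'; lra.
have m1 : r * D' <= r * (2 * (rho x u `^ beta + rho x v `^ beta)).
  by apply: ler_wpM2l => //; exact: ltW.
have : r <= 2 * Rx rho beta g x' u v.
  rewrite -(ler_pM2r Dp) -mulrA eR gd; lra.
move=> h; apply: le_trans h _; rewrite ler_pM2l //; lra.
Qed.
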